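(* Let $q$ be a nonzero complex number with $q^4\ne1$ and let $\zeta,\zeta'$ be nonzero complex numbers with $\zeta\neq\pm1$, $\zeta'\neq\pm1$, $\zeta\zeta'\neq\pm1$. Then the space of (grading-preserving) $U_q(\mathfrak{sl}(1|1))$-module homomorphisms $V(\zeta)\otimes V(\zeta')\to V(\zeta')\otimes V(\zeta)$ is two-dimensional, spanned by $R_{\zeta,\zeta'}$ and $R'_{\zeta,\zeta'}$, where (with $x,y$ and $x',y'$ the standard bases of $V(\zeta)$, $V(\zeta')$) \[R_{\zeta,\zeta'}:\ x\otimes x'\mapsto x'\otimes x,\ x\otimes y'\mapsto \zeta\, y'\otimes x,\ y\otimes x'\mapsto \zeta' x'\otimes y+(1-\zeta^2)\,y'\otimes x,\ y\otimes y'\mapsto -\zeta\zeta'\, y'\otimes y,\] \[R'_{\zeta,\zeta'}:\ x\otimes x'\mapsto -\zeta\zeta'\,x'\otimes x,\ x\otimes y'\mapsto (1-(\zeta')^2)\,x'\otimes y-\zeta'\,y'\otimes x,\ y\otimes x'\mapsto -\zeta\, x'\otimes y,\ y\otimes y'\mapsto y'\otimes y.\]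
   Context: $[\zeta]=\frac{\zeta-\zeta^{-1}}{q-q^{-1}}$. $U_q(\mathfrak{sl}(1|1))$ is the associative superalgebra generated by odd $E,F$ and even invertible central $W^{\pm1}$ with relations $EF+FE=\frac{W-W^{-1}}{q-q^{-1}}$, $E^2=F^2=0$; it is a Hopf superalgebra with $\Delta(W)=W\otimes W$, $\Delta(E)=E\otimes W^{-1}+1\otimes E$, $\Delta(F)=F\otimes1+W\otimes F$, and tensor products of modules use the sign rule $(a\otimes b)(v\otimes w)=(-1)^{|b||v|}(av\otimes bw)$ for homogeneous elements. For $\zeta\in\mathbb{C}^\times$, $V(\zeta)$ is the $(1|1)$-dimensional module with basis $x$ (even), $y$ (odd) and $Ex=0$, $Fx=y$, $Wx=\zeta x$, $Fy=0$, $Ey=[\zeta]x$, $Wy=\zeta y$. Module homomorphisms are required to preserve the $\mathbb{Z}_2$-grading. *)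

(* Defs.v *)
From HB Require Import structures.
From mathcomp Require Import all_boot all_order all_algebra.
From mathcomp Require Import complex reals.
Set Implicit Arguments. Unset Strict Implicit. Unset Printing Implicit Defensive.
Import Order.TTheory GRing.Theory Num.Theory.
Local Open Scope ring_scope.

Section Defs.
Variable (R : realType).
Local Notation C := (R[i])%type.

Definition qbr (q z : C) : C := (z - z^-1) / (q - q^-1).

(* Basis of V(z) indexed by bool: false = x (even), true = y (odd).
   A linear operator is a coefficient function  A out in.               *)
Definition op (T : Type) := T -> T -> C.

Definition actE (q z : C) : op bool := fun o i => if ~~ o && i then qbr q z else 0.
Definition actF : op bool := fun o i => if o && ~~ i then 1 else 0.
Definition actW (z : C) : op bool := fun o i => if o == i then z else 0.
Definition actWinv (z : C) : op bool := fun o i => if o == i then z^-1 else 0.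
Definition id1 : op bool := fun o i => if o == i then 1 else 0.

(* a (x) b on the tensor product, with b homogeneous of parity pb, using
   the sign rule (a (x) b)(v (x) w) = (-1)^{|b||v|} a v (x) b w. *)
Definition tens (pb : bool) (a b : op bool) : op (bool * bool) :=
  fun o i => (if pb && i.1 then -1 else 1) * a o.1 i.1 * b o.2 i.2.

Definition opadd (T : Type) (A B : op T) : op T := fun o i => A o i + B o i.

(* Actions on V(z) (x) V(z') through the coproduct:
   D(E) = E (x) W^-1 + 1 (x) E,  D(F) = F (x) 1 + W (x) F,  D(W^{+-1}) = W^{+-1} (x) W^{+-1}. *)
Definition tE (q z z' : C) := opadd (tens false (actE q z) (actWinv z')) (tens true id1 (actE q z')).
Definition tF (z z' : C) := opadd (tens false actF id1) (tens true (actW z) actF).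
Definition tW (z z' : C) := tens false (actW z) (actW z').
Definition tWinv (z z' : C) := tens false (actWinv z) (actWinv z').

Definition comp (A B : op (bool * bool)) : op (bool * bool) :=
  fun o i => \sum_(k : bool * bool) A o k * B k i.

Definition parity (b : bool * bool) : bool := b.1 (+) b.2.

(* phi : V(z) (x) V(z') -> V(z') (x) V(z); input index (i, i') with i for V(z),
   output index (j', j) with j' for V(z').  Grading-preserving module map. *)
Definition is_hom (q z z' : C) (phi : op (bool * bool)) : Prop :=
  [/\ forall o i, parity o != parity i -> phi o i = 0,
      forall o i, comp phi (tE q z z') o i = comp (tE q z' z) phi o i,
      forall o i, comp phi (tF z z') o i = comp (tF z' z) phi o i,
      forall o i, comp phi (tW z z') o i = comp (tW z' z) phi o i &
      forall o i, comp phi (tWinv z z') o i = comp (tWinv z' z) phi o i].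

Definition Rmap (z z' : C) : op (bool * bool) := fun o i =>
  match i, o with
  | (false, false), (false, false) => 1
  | (false, true), (true, false) => z
  | (true, false), (false, true) => z'
  | (true, false), (true, false) => 1 - z ^+ 2
  | (true, true), (true, true) => - (z * z')
  | _, _ => 0
  end.

Definition Rmap' (z z' : C) : op (bool * bool) := fun o i =>
  match i, o with
  | (false, false), (false, false) => - (z * z')
  | (false, true), (false, true) => 1 - z' ^+ 2
  | (false, true), (true, false) => - z'
  | (true, false), (false, true) => - z
  | (true, true), (true, true) => 1
  | _, _ => 0
  end.

End Defs.

(* Main.v *)
Require Import Defs.
From HB Require Import structures.
From mathcomp Require Import all_boot all_order all_algebra.
From mathcomp Require Import complex reals.
From mathcomp Require Import ring.
Import Order.TTheory GRing.Theory Num.Theory.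
Local Open Scope ring_scope.

Lemma sum4 (R : realType) (F : bool * bool -> R[i]) :
  \sum_(k : bool * bool) F k = F (true,true) + F (true,false) + (F (false,true) + F (false,false)).
Proof. rewrite (eq_bigr (fun k => F (k.1,k.2))); last by case.
by rewrite -(pair_bigA _ (fun a b => F (a,b))) /= !big_bool /=. Qed.

Ltac simp e := rewrite /Defs.comp !sum4 /tE /tF /tW /tWinv /opadd /tens /actE /actF /actW /actWinv /id1 /= in e;
  rewrite ?(mulr0, mul0r, mulr1, mul1r, addr0, add0r, mulN1r, oppr0) in e.

Lemma backward (R : realType) (q z z' a b : R[i]) (phi : op R (bool*bool)) :
  q != 0 -> q * q - 1 != 0 -> z != 0 -> z' != 0 ->
  (forall o i, phi o i = a * Rmap z z' o i + b * Rmap' z z' o i) ->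
  is_hom q z z' phi.
Proof.
move=> hq hq2 hz hz' Hp.
have Eq w : qbr q w = (w - w^-1) / (q - q^-1) by [].
split.
- by case=> [[] []] [[] []] //= _; rewrite Hp /= ?mulr0 ?addr0.
- move=> o i; rewrite /Defs.comp !sum4 !Hp /tE /opadd /tens /actE /actWinv /id1 !Eq.
  by case: o => [[] []]; case: i => [[] []] /=; field; rewrite ?hq ?hq2 ?hz ?hz'.
- move=> o i; rewrite /Defs.comp !sum4 !Hp /tF /opadd /tens /actF /actW /id1.
  by case: o => [[] []]; case: i => [[] []] /=; ring.
- move=> o i; rewrite /Defs.comp !sum4 !Hp /tW /opadd /tens /actW.
  by case: o => [[] []]; case: i => [[] []] /=; ring.
- move=> o i; rewrite /Defs.comp !sum4 !Hp /tWinv /opadd /tens /actWinv.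
  by case: o => [[] []]; case: i => [[] []] /=; ring.
Qed.

Lemma forward (R : realType) (q z z' : R[i]) (phi : op R (bool*bool)) :
  q != 0 -> q * q - 1 != 0 -> z != 0 -> z' != 0 -> z' * z' - 1 != 0 ->
  is_hom q z z' phi ->
  exists a b : R[i], forall o i, phi o i = a * Rmap z z' o i + b * Rmap' z z' o i.
Proof.
move=> hq hq2 hz hz' hz2 [Hpar HE HF _ _].
have p1 : phi (false,false) (false,true) = 0 by apply: Hpar.
have p2 : phi (false,false) (true,false) = 0 by apply: Hpar.
have p3 : phi (true,true) (false,true) = 0 by apply: Hpar.
have p4 : phi (true,true) (true,false) = 0 by apply: Hpar.
have p5 : phi (false,true) (false,false) = 0 by apply: Hpar.
have p6 : phi (false,true) (true,true) = 0 by apply: Hpar.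
have p7 : phi (true,false) (false,false) = 0 by apply: Hpar.
have p8 : phi (true,false) (true,true) = 0 by apply: Hpar.
have hC := HF (false,false) (false,true); simp hC.
have hB := HE (true,true) (false,true); simp hB.
have h5 := HE (false,false) (false,true); simp h5.
have hg := HF (false,true) (false,false); simp hg.
have hh := HF (true,false) (false,false); simp hh.
have hD := HF (true,true) (false,true); simp hD.
have hz21 : 1 - z' * z' != 0 by rewrite -opprB oppr_eq0.
have qz' : qbr q z' != 0.
  rewrite /qbr; apply: mulf_neq0; last first.
    rewrite invr_eq0; apply: contra hq2 => /eqP h0; apply/eqP.
    have -> : q * q - 1 = (q - q^-1) * q by field.
    by rewrite h0 mul0r.
  apply: contra hz2 => /eqP h0; apply/eqP.
  have -> : z' * z' - 1 = (z' - z'^-1) * z' by field.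
  by rewrite h0 mul0r.
have hB' : phi (true,true) (false,false) = 0.
  by move/eqP: hB; rewrite mulf_eq0 (negbTE qz') orbF => /eqP.
have hA : phi (false,false) (false,false) =
   (qbr q z' / z * phi (true, false) (false, true) + qbr q z * phi (false, true) (false, true)) / qbr q z'.
  by rewrite -h5 mulfK.
have hg' : phi (false, true) (true, false) = z' * phi (false, false) (false, false) - phi (false, true) (false, true) * z.
  by rewrite -hg addrK.
have hh' : phi (true, false) (true, false) = phi (false, false) (false, false) - phi (true, false) (false, true) * z.
  by rewrite -hh addrK.
exists ((phi (true, false) (false, true) + phi (false, true) (false, true) / (1 - z' * z') * z') / z), (phi (false, true) (false, true) / (1 - z' * z')).
case=> [[] []] [[] []]; rewrite /Rmap /Rmap' /= ?p1 ?p2 ?p3 ?p4 ?p5 ?p6 ?p7 ?p8 ?hB' ?hC ?hD ?hg' ?hh' ?hA /qbr;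
  field; by rewrite ?hz21 ?hz ?hz' ?hq ?hq2 ?hz2.
Qed.

Lemma sq_ne (R : realType) (w : R[i]) : w != 1 -> w != -1 -> w * w - 1 != 0.
Proof.
move=> h1 h2; have -> : w * w - 1 = (w - 1) * (w + 1) by ring.
by rewrite mulf_neq0 // ?subr_eq0 // addr_eq0.
Qed.

Theorem theorem5p1 (R : realType) (q z z' : R[i]) :
  q != 0 -> q ^+ 4 != 1 ->
  z != 0 -> z' != 0 ->
  z != 1 -> z != -1 -> z' != 1 -> z' != -1 ->
  z * z' != 1 -> z * z' != -1 ->
  (forall phi : op R (bool * bool),
      is_hom q z z' phi <->
      exists a b : R[i], forall o i, phi o i = a * Rmap z z' o i + b * Rmap' z z' o i)
  /\
  (forall a b : R[i],
      (forall o i, a * Rmap z z' o i + b * Rmap' z z' o i = 0) -> a = 0 /\ b = 0).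
Proof.
move=> hq hq4 hz hz' z1 zm1 z'1 z'm1 _ _.
have hq2 : q * q - 1 != 0.
  apply: contra hq4; rewrite subr_eq0 => /eqP h; apply/eqP.
  by rewrite (_ : 4 = 2 * 2)%N // exprM [q ^+ 2]expr2 h expr2 mulr1.
have hz2 : z * z - 1 != 0 by apply: sq_ne.
have hz'2 : z' * z' - 1 != 0 by apply: sq_ne.
split.
  move=> phi; split; first exact: forward.
  by case=> a [b Hp]; apply: backward Hp.
move=> a b H; split.
  have := H (true,false) (true,false); rewrite /Rmap /Rmap' /= mulr0 addr0 => /eqP.
  rewrite mulf_eq0 => /orP [/eqP //|]; rewrite subr_eq0 eq_sym expr2 => /eqP h.
  by move: hz2; rewrite h subrr eqxx.
have := H (false,true) (false,true); rewrite /Rmap /Rmap' /= mulr0 add0r => /eqP.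
rewrite mulf_eq0 => /orP [/eqP //|]; rewrite subr_eq0 eq_sym expr2 => /eqP h.
by move: hz'2; rewrite h subrr eqxx.
Qed.
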